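(* Let $c_1>0>c_2$, $L=c_1-c_2$, $t_0>0$, and set $$q_1(0)=\ln L-c_1t_0-\ln\big(c_1-c_2e^{-Lt_0}\big),\qquad q_2(0)=-\ln L-c_2t_0+\ln\big(c_1e^{-Lt_0}-c_2\big).$$ Define for $\xi\in[q_1(0),q_2(0)]$ $$h_*(\xi)=\frac{4c_1^2c_2^2(1-e^{-Lt_0})^2e^{\xi}}{\Big(Le^{-c_1t_0}+c_2-c_1e^{-Lt_0}+\big(-c_1+c_2e^{-Lt_0}+Le^{c_2t_0}\big)e^{\xi}\Big)^2}.$$ Then (whenever the denominator does not vanish on $[q_1(0),q_2(0)]$) $$\int_{q_1(0)}^{q_2(0)}h_*(\xi)\,d\xi=-4c_1c_2 .$$ Moreover $h_*(\xi)=\lim_{t\uparrow t_0}u_x\big(t,y_m(t,\xi)\big)^2\,\partial_\xi y_m(t,\xi)$ for $\xi\in(q_1(0),q_2(0))$, where $u$ and $y_m$ are as in the context.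
   Context: For $t\neq t_0$ let $p_1(t)=\frac{c_1-c_2e^{L(t-t_0)}}{1-e^{L(t-t_0)}}$, $p_2(t)=\frac{c_2-c_1e^{L(t-t_0)}}{1-e^{L(t-t_0)}}$, $q_1(t)=\ln L+c_1(t-t_0)-\ln(c_1-c_2e^{L(t-t_0)})$, $q_2(t)=-\ln L+c_2(t-t_0)+\ln(c_1e^{L(t-t_0)}-c_2)$, and $u(t,x)=p_1(t)e^{-|x-q_1(t)|}+p_2(t)e^{-|x-q_2(t)|}$ for $t<t_0$. With $C(\xi)=c_2-c_1e^{-Lt_0}+Le^{\xi+c_2t_0}$ and $D(\xi)=L^2e^{-c_1t_0}-Lc_1e^{\xi}+Lc_2e^{\xi-Lt_0}$, let $$y_m(t,\xi)=\ln\!\left(\frac{e^{c_2(t-t_0)}}{L}\cdot\frac{(c_1e^{L(t-t_0)}-c_2)D(\xi)+L^2e^{c_1(t-t_0)}C(\xi)}{D(\xi)+(c_1e^{c_2(t-t_0)}-c_2e^{c_1(t-t_0)})C(\xi)}\right),$$ the characteristic (solution of $\partial_t y=u(t,y)$, $y(0,\xi)=\xi$) starting between the two peaks. *)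

(* Defs.v *)
From Stdlib Require Import Reals.
Open Scope R_scope.

Section Defs.
Variables c1 c2 t0 : R.
Let L := c1 - c2.

Definition p1 (t : R) : R :=
  (c1 - c2 * exp (L * (t - t0))) / (1 - exp (L * (t - t0))).
Definition p2 (t : R) : R :=
  (c2 - c1 * exp (L * (t - t0))) / (1 - exp (L * (t - t0))).
Definition q1 (t : R) : R :=
  ln L + c1 * (t - t0) - ln (c1 - c2 * exp (L * (t - t0))).
Definition q2 (t : R) : R :=
  - ln L + c2 * (t - t0) + ln (c1 * exp (L * (t - t0)) - c2).

(* the two-peakon solution u(t,x), t < t0 *)
Definition u (t x : R) : R :=
  p1 t * exp (- Rabs (x - q1 t)) + p2 t * exp (- Rabs (x - q2 t)).

Definition Cf (xi : R) : R :=
  c2 - c1 * exp (- L * t0) + L * exp (xi + c2 * t0).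
Definition Df (xi : R) : R :=
  L ^ 2 * exp (- c1 * t0) - L * c1 * exp xi + L * c2 * exp (xi - L * t0).

Definition ym (t xi : R) : R :=
  ln (exp (c2 * (t - t0)) / L *
      (((c1 * exp (L * (t - t0)) - c2) * Df xi
         + L ^ 2 * exp (c1 * (t - t0)) * Cf xi)
       / (Df xi + (c1 * exp (c2 * (t - t0)) - c2 * exp (c1 * (t - t0))) * Cf xi))).

Definition q10 : R := ln L - c1 * t0 - ln (c1 - c2 * exp (- L * t0)).
Definition q20 : R := - ln L - c2 * t0 + ln (c1 * exp (- L * t0) - c2).

Definition hden (xi : R) : R :=
  L * exp (- c1 * t0) + c2 - c1 * exp (- L * t0)
  + (- c1 + c2 * exp (- L * t0) + L * exp (c2 * t0)) * exp xi.

Definition hstar (xi : R) : R :=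
  4 * c1 ^ 2 * c2 ^ 2 * (1 - exp (- L * t0)) ^ 2 * exp xi / (hden xi) ^ 2.
End Defs.

(* Main.v *)
Require Import Defs.
From Stdlib Require Import Reals Lra.
From Coquelicot Require Import Coquelicot.
Open Scope R_scope.


Lemma AB_neg (c1 c2 t0 : R) (hc1 : 0 < c1) (hc2 : c2 < 0) (ht0 : 0 < t0) :
  (c1 - c2) * exp (- c1 * t0) + c2 - c1 * exp (- (c1 - c2) * t0) < 0 /\
  - c1 + c2 * exp (- (c1 - c2) * t0) + (c1 - c2) * exp (c2 * t0) < 0.
Proof.
  set (a := exp (- c1 * t0)). set (b := exp (c2 * t0)).
  assert (hE : exp (- (c1 - c2) * t0) = a * b).
  { unfold a, b; rewrite <- exp_plus; f_equal; ring. }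
  rewrite hE.
  assert (ha : 0 < a) by apply exp_pos. assert (hb : 0 < b) by apply exp_pos.
  set (ea := exp (c1 * t0)). set (eb := exp (- c2 * t0)).
  assert (haea : a * ea = 1). { unfold a, ea; rewrite <- exp_plus, <- exp_0; f_equal; ring. }
  assert (hbeb : b * eb = 1). { unfold b, eb; rewrite <- exp_plus, <- exp_0; f_equal; ring. }
  assert (h1 : 1 + c2 * t0 <= b) by apply exp_ineq1_le.
  assert (h2 : 1 + c1 * t0 < ea) by (apply exp_ineq1; nra).
  assert (h3 : 1 + - c1 * t0 <= a) by apply exp_ineq1_le.
  assert (h4 : 1 + - c2 * t0 < eb) by (apply exp_ineq1; nra).
  split.
  { replace ((c1 - c2) * a + c2 - c1 * (a * b)) with (a * (c1 * (1 - b) + c2 * (ea - 1))).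
    2:{ transitivity ((c1 - c2) * a + c2 * (a * ea) - c1 * (a * b)). ring. rewrite haea. ring. }
    assert (c1 * (1 - b) + c2 * (ea - 1) < 0) by nra. nra. }
  { replace (- c1 + c2 * (a * b) + (c1 - c2) * b) with (b * (c1 * (1 - eb) + c2 * (a - 1))).
    2:{ transitivity (- c1 * (b * eb) + c2 * (a * b) + (c1 - c2) * b). 2:{ rewrite hbeb; ring. } ring. }
    assert (c1 * (1 - eb) + c2 * (a - 1) < 0) by nra. nra. }
Qed.

Lemma hden_neg (c1 c2 t0 : R) (hc1 : 0 < c1) (hc2 : c2 < 0) (ht0 : 0 < t0) xi :
  hden c1 c2 t0 xi < 0.
Proof.
  destruct (AB_neg c1 c2 t0 hc1 hc2 ht0) as [hA hB].
  assert (hX : 0 < exp xi) by apply exp_pos.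
  unfold hden. nra.
Qed.

Lemma exp_q10 c1 c2 t0 (hc1 : 0 < c1) (hc2 : c2 < 0) :
  exp (q10 c1 c2 t0) = (c1 - c2) * exp (- c1 * t0) / (c1 - c2 * exp (- (c1 - c2) * t0)).
Proof.
  assert (0 < exp (- (c1 - c2) * t0)) by apply exp_pos.
  assert (h : 0 < c1 - c2 * exp (- (c1 - c2) * t0)) by nra.
  replace (q10 c1 c2 t0) with (ln (c1 - c2) + (- c1 * t0) + - ln (c1 - c2 * exp (- (c1 - c2) * t0))) by (unfold q10; ring).
  rewrite !exp_plus, exp_Ropp, !exp_ln by lra. reflexivity.
Qed.

Lemma exp_q20 c1 c2 t0 (hc1 : 0 < c1) (hc2 : c2 < 0) :
  exp (q20 c1 c2 t0) = (c1 * exp (- (c1 - c2) * t0) - c2) / ((c1 - c2) * exp (c2 * t0)).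
Proof.
  assert (0 < exp (- (c1 - c2) * t0)) by apply exp_pos.
  assert (h : 0 < c1 * exp (- (c1 - c2) * t0) - c2) by nra.
  replace (q20 c1 c2 t0) with (- ln (c1 - c2) + - (c2 * t0) + ln (c1 * exp (- (c1 - c2) * t0) - c2)) by (unfold q20; ring).
  rewrite !exp_plus, !exp_Ropp, !exp_ln by lra.
  field. split. apply Rgt_not_eq, exp_pos. lra.
Qed.

Lemma helper_neg Z B Y W : 0 < W -> Z + B * (Y / W) < 0 -> Z * W + B * Y < 0.
Proof. intros. replace (Z*W + B*Y) with (W * (Z + B*(Y/W))) by (field; lra). nra. Qed.

Lemma part1 (c1 c2 t0 : R) (hc1 : 0 < c1) (hc2 : c2 < 0) (ht0 : 0 < t0) :
   exists pr : Riemann_integrable (hstar c1 c2 t0) (q10 c1 c2 t0) (q20 c1 c2 t0),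
     RiemannInt pr = - 4 * c1 * c2.
Proof.
  destruct (AB_neg c1 c2 t0 hc1 hc2 ht0) as [hA hBn].
  set (E := exp (- (c1 - c2) * t0)) in *.
  set (a := exp (- c1 * t0)) in *. set (b := exp (c2 * t0)) in *.
  set (B := - c1 + c2 * E + (c1 - c2) * b) in *.
  set (K := 4 * c1 ^ 2 * c2 ^ 2 * (1 - E) ^ 2).
  set (F := fun x => - K / (B * hden c1 c2 t0 x)).
  assert (hd : forall x, is_derive F x (hstar c1 c2 t0 x)).
  { intro x. assert (h := hden_neg c1 c2 t0 hc1 hc2 ht0 x).
    unfold F, hstar. unfold hden in *. fold E a b B in h. fold E a b B.
    auto_derive.
    - apply Rmult_integral_contrapositive; split; lra.
    - unfold K. field. split; lra. }
  assert (hc : forall x, continuous (hstar c1 c2 t0) x).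
  { intro x. apply (ex_derive_continuous (K:=R_AbsRing) (V:=R_NormedModule)). assert (h := hden_neg c1 c2 t0 hc1 hc2 ht0 x).
    unfold hstar. unfold hden in *. fold E a b B in h. fold E a b B.
    auto_derive. rewrite Rmult_1_r. apply Rmult_integral_contrapositive; split; lra. }
  assert (hI : is_RInt (hstar c1 c2 t0) (q10 c1 c2 t0) (q20 c1 c2 t0)
                 (minus (F (q20 c1 c2 t0)) (F (q10 c1 c2 t0)))).
  { apply (is_RInt_derive (V:=R_CompleteNormedModule) F); intros; auto. }
  exists (ex_RInt_Reals_0 _ _ _ (ex_intro _ _ hI)).
  rewrite <- RInt_Reals. rewrite (is_RInt_unique _ _ _ _ hI).
  assert (h1 := hden_neg c1 c2 t0 hc1 hc2 ht0 (q10 c1 c2 t0)).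
  assert (h2 := hden_neg c1 c2 t0 hc1 hc2 ht0 (q20 c1 c2 t0)).
  unfold minus, plus, opp; simpl. unfold F. unfold hden in *.
  rewrite exp_q10, exp_q20 in * by lra. fold E a b B in h1. fold E a b B in h2. fold E a b B.
  assert (hEab : E = a * b). { unfold E, a, b; rewrite <- exp_plus; f_equal; ring. }
  assert (ha : 0 < a) by apply exp_pos. assert (hb : 0 < b) by apply exp_pos.
  assert (hE0 : 0 < E) by apply exp_pos.
  assert (h3 : 0 < c1 - c2 * E) by nra.
  assert (h4 : 0 < c1 * E - c2) by nra.
  unfold K, B in *. rewrite hEab in *.
  field. repeat split; try lra. all: try nra. all: apply Rlt_not_eq; apply helper_neg; auto; nra.
Qed.

Lemma lt_div_mul P Q X : 0 < Q -> P / Q < X -> P < X * Q.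
Proof. intros hQ h. replace P with ((P / Q) * Q) by (field; lra). nra. Qed.
Lemma div_lt_mul P Q X : 0 < Q -> X < P / Q -> X * Q < P.
Proof. intros hQ h. replace P with ((P / Q) * Q) by (field; lra). nra. Qed.

Lemma CD_neg c1 c2 t0 xi (hc1 : 0 < c1) (hc2 : c2 < 0) (ht0 : 0 < t0) :
  q10 c1 c2 t0 < xi < q20 c1 c2 t0 -> Cf c1 c2 t0 xi < 0 /\ Df c1 c2 t0 xi < 0.
Proof.
  intros [h1 h2].
  apply exp_increasing in h1. apply exp_increasing in h2.
  rewrite exp_q10 in h1 by lra. rewrite exp_q20 in h2 by lra.
  set (E := exp (- (c1 - c2) * t0)) in *.
  set (a := exp (- c1 * t0)) in *. set (b := exp (c2 * t0)) in *.
  set (X := exp xi) in *.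
  assert (hE0 : 0 < E) by apply exp_pos. assert (hb : 0 < b) by apply exp_pos.
  apply lt_div_mul in h1; [|nra]. apply div_lt_mul in h2; [|nra].
  unfold Cf, Df.
  replace (exp (xi + c2 * t0)) with (X * b) by (unfold X, b; rewrite exp_plus; auto).
  replace (exp (xi - (c1 - c2) * t0)) with (X * E)
    by (unfold X, E; rewrite <- exp_plus; f_equal; ring).
  fold E a. assert (hL : 0 < c1 - c2) by lra. split.
  - lra.
  - assert (h3 := Rmult_lt_compat_l (c1 - c2) _ _ hL h1). fold X. lra.
Qed.

Lemma order_alg c1 c2 m1 m2 C D : 0 < c1 -> c2 < 0 -> 0 < m1 -> 0 < m2 -> m1 <> m2 ->
  C < 0 -> D < 0 ->
  (c1 - c2) * m1 / (c1 - c2 * (m1 / m2)) <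
    m2 / (c1 - c2) * (((c1 * (m1 / m2) - c2) * D + (c1 - c2) ^ 2 * m1 * C) /
                      (D + (c1 * m2 - c2 * m1) * C)) /\
  m2 / (c1 - c2) * (((c1 * (m1 / m2) - c2) * D + (c1 - c2) ^ 2 * m1 * C) /
                      (D + (c1 * m2 - c2 * m1) * C)) < (c1 * (m1 / m2) - c2) * m2 / (c1 - c2).
Proof.
  intros hc1 hc2 hm1 hm2 hne hC hD.
  assert (hDn : D + (c1 * m2 - c2 * m1) * C < 0).
  { assert (0 < c1 * m2 - c2 * m1) by nra. nra. }
  assert (hw : 0 < m1 / m2) by (apply Rdiv_lt_0_compat; lra).
  assert (hsq : 0 < (m1 - m2) ^ 2).
  { assert (m1 - m2 <> 0) by lra. simpl. rewrite Rmult_1_r. apply Rsqr_pos_lt in H. exact H. }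
  split.
  - apply Rminus_gt_0_lt.
    match goal with |- 0 < ?A - ?B =>
      replace (A - B) with ((- c1 * c2) * (m1 - m2) ^ 2 * (- D) /
                            (m2 * (c1 - c2) * (- (D + (c1 * m2 - c2 * m1) * C)) * (c1 - c2 * (m1 / m2))))
    end.
    + apply Rdiv_lt_0_compat. 
      * apply Rmult_lt_0_compat; [apply Rmult_lt_0_compat|]; nra.
      * apply Rmult_lt_0_compat; [apply Rmult_lt_0_compat; [apply Rmult_lt_0_compat|]|]; nra.
    + field. repeat split; try lra; nra.
  - apply Rminus_gt_0_lt.
    match goal with |- 0 < ?A - ?B =>
      replace (A - B) with ((- c1 * c2) * (m1 - m2) ^ 2 * (- C) /
                            ((c1 - c2) * (- (D + (c1 * m2 - c2 * m1) * C))))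
    end.
    + apply Rdiv_lt_0_compat. 
      * apply Rmult_lt_0_compat; [apply Rmult_lt_0_compat|]; nra.
      * apply Rmult_lt_0_compat; nra.
    + field. repeat split; try lra; nra.
Qed.

Lemma lim_of_cont (f g : R -> R) (P : R -> Prop) x0 l :
  (forall t, P t -> t <> x0) -> (forall t, P t -> f t = g t) ->
  continuity_pt g x0 -> g x0 = l -> limit1_in f P l x0.
Proof.
  intros hP hfg hc hl eps heps.
  destruct (hc eps heps) as [alp [halp H]].
  exists alp. split; auto. intros x [hx hd].
  rewrite hfg by auto. rewrite <- hl. apply H. split; auto. split; [exact I|].
  intro e; apply (hP x hx); auto.
Qed.

Section P2.
Variables c1 c2 t0 xi : R.
Hypotheses (hc1 : 0 < c1) (hc2 : c2 < 0) (ht0 : 0 < t0).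
Hypothesis hxi : q10 c1 c2 t0 < xi < q20 c1 c2 t0.

Definition Nf t := (c1 * exp ((c1 - c2) * (t - t0)) - c2) * Df c1 c2 t0 xi
     + (c1 - c2) ^ 2 * exp (c1 * (t - t0)) * Cf c1 c2 t0 xi.
Definition Dnf t := Df c1 c2 t0 xi +
     (c1 * exp (c2 * (t - t0)) - c2 * exp (c1 * (t - t0))) * Cf c1 c2 t0 xi.
Definition Yf t := exp (c2 * (t - t0)) / (c1 - c2) * (Nf t / Dnf t).

Lemma ym_Yf t : ym c1 c2 t0 t xi = ln (Yf t).
Proof. reflexivity. Qed.

Lemma Nf_neg t : Nf t < 0.
Proof.
  destruct (CD_neg c1 c2 t0 xi hc1 hc2 ht0 hxi) as [hC hD].
  unfold Nf. assert (0 < exp ((c1 - c2) * (t - t0))) by apply exp_pos.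
  assert (0 < exp (c1 * (t - t0))) by apply exp_pos.
  assert (0 < c1 * exp ((c1 - c2) * (t - t0)) - c2) by nra.
  assert (0 < (c1 - c2) ^ 2 * exp (c1 * (t - t0))) by (apply Rmult_lt_0_compat; [apply pow_lt|]; lra).
  nra.
Qed.

Lemma Dnf_neg t : Dnf t < 0.
Proof.
  destruct (CD_neg c1 c2 t0 xi hc1 hc2 ht0 hxi) as [hC hD].
  unfold Dnf. assert (0 < exp (c2 * (t - t0))) by apply exp_pos.
  assert (0 < exp (c1 * (t - t0))) by apply exp_pos.
  assert (0 < c1 * exp (c2 * (t - t0)) - c2 * exp (c1 * (t - t0))) by nra.
  nra.
Qed.

Lemma Yf_pos t : 0 < Yf t.
Proof.
  assert (h1 := Nf_neg t). assert (h2 := Dnf_neg t).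
  unfold Yf. apply Rmult_lt_0_compat.
  - apply Rdiv_lt_0_compat; [apply exp_pos|lra].
  - replace (Nf t / Dnf t) with ((- Nf t) / (- Dnf t)) by (field; lra).
    apply Rdiv_lt_0_compat; lra.
Qed.

Definition Cp := (c1 - c2) * exp (xi + c2 * t0).
Definition Dp := - ((c1 - c2) * c1 * exp xi) + (c1 - c2) * c2 * exp (xi - (c1 - c2) * t0).
Definition K0 := Dp * Cf c1 c2 t0 xi - Df c1 c2 t0 xi * Cp.

Definition Dyf t :=
  ((c1 * exp ((c1 - c2) * (t - t0)) - c2) * (c1 * exp (c2 * (t - t0)) - c2 * exp (c1 * (t - t0)))
    - (c1 - c2) ^ 2 * exp (c1 * (t - t0))) * K0 / (Nf t * Dnf t).

Lemma Dy_deriv t : is_derive (fun s => ym c1 c2 t0 t s) xi (Dyf t).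
Proof.
  assert (h1 := Nf_neg t). assert (h2 := Dnf_neg t). assert (h3 := Yf_pos t).
  unfold Yf, Nf, Dnf in *. unfold Dyf, K0, Cp, Dp, Nf, Dnf.
  unfold ym, Cf, Df in *.
  auto_derive.
  - unfold Rminus in *.
    replace ((c1 + - c2) * ((c1 + - c2) * 1)) with ((c1 + - c2) ^ 2) by ring.
    split; [apply Rlt_not_eq; lra | split; [exact h3 | exact I]].
  - unfold Rminus in *.
    replace ((c1 + - c2) * ((c1 + - c2) * 1)) with ((c1 + - c2) ^ 2) by ring.
    field. repeat split; try (apply Rlt_not_eq; lra); try lra; apply Rgt_not_eq, exp_pos.
Qed.

Lemma hw_eq t : exp ((c1 - c2) * (t - t0)) = exp (c1 * (t - t0)) / exp (c2 * (t - t0)).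
Proof.
  unfold Rdiv. rewrite <- exp_Ropp, <- exp_plus. f_equal. ring.
Qed.

Lemma exp_q1 t : exp (q1 c1 c2 t0 t) =
  (c1 - c2) * exp (c1 * (t - t0)) / (c1 - c2 * (exp (c1 * (t - t0)) / exp (c2 * (t - t0)))).
Proof.
  rewrite <- hw_eq.
  assert (0 < exp ((c1 - c2) * (t - t0))) by apply exp_pos.
  assert (h : 0 < c1 - c2 * exp ((c1 - c2) * (t - t0))) by nra.
  replace (q1 c1 c2 t0 t) with (ln (c1 - c2) + c1 * (t - t0) + - ln (c1 - c2 * exp ((c1 - c2) * (t - t0)))) by (unfold q1; ring).
  rewrite !exp_plus, exp_Ropp, !exp_ln by lra. reflexivity.
Qed.

Lemma exp_q2 t : exp (q2 c1 c2 t0 t) =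
  (c1 * (exp (c1 * (t - t0)) / exp (c2 * (t - t0))) - c2) * exp (c2 * (t - t0)) / (c1 - c2).
Proof.
  rewrite <- hw_eq.
  assert (0 < exp ((c1 - c2) * (t - t0))) by apply exp_pos.
  assert (h : 0 < c1 * exp ((c1 - c2) * (t - t0)) - c2) by nra.
  replace (q2 c1 c2 t0 t) with (- ln (c1 - c2) + c2 * (t - t0) + ln (c1 * exp ((c1 - c2) * (t - t0)) - c2)) by (unfold q2; ring).
  rewrite !exp_plus, exp_Ropp, !exp_ln by lra. field. lra.
Qed.

Lemma m_ne t : t < t0 -> exp (c1 * (t - t0)) <> exp (c2 * (t - t0)).
Proof.
  intros ht. assert (exp (c1 * (t - t0)) < exp (c2 * (t - t0))) by (apply exp_increasing; nra). lra.
Qed.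

Lemma order_t t : t < t0 -> q1 c1 c2 t0 t < ym c1 c2 t0 t xi < q2 c1 c2 t0 t.
Proof.
  intros ht.
  destruct (CD_neg c1 c2 t0 xi hc1 hc2 ht0 hxi) as [hC hD].
  assert (hY := Yf_pos t).
  destruct (order_alg c1 c2 (exp (c1 * (t - t0))) (exp (c2 * (t - t0))) (Cf c1 c2 t0 xi) (Df c1 c2 t0 xi)
              hc1 hc2 (exp_pos _) (exp_pos _) (m_ne t ht) hC hD) as [o1 o2].
  rewrite <- exp_q1 in o1. rewrite <- exp_q2 in o2.
  assert (hYe : Yf t = exp (c2 * (t - t0)) / (c1 - c2) *
         (((c1 * (exp (c1 * (t - t0)) / exp (c2 * (t - t0))) - c2) * Df c1 c2 t0 xi +
           (c1 - c2) ^ 2 * exp (c1 * (t - t0)) * Cf c1 c2 t0 xi) /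
          (Df c1 c2 t0 xi + (c1 * exp (c2 * (t - t0)) - c2 * exp (c1 * (t - t0))) * Cf c1 c2 t0 xi))).
  { unfold Yf, Nf, Dnf. rewrite hw_eq. reflexivity. }
  rewrite <- hYe in o1, o2.
  rewrite ym_Yf. split.
  - rewrite <- (ln_exp (q1 c1 c2 t0 t)). apply ln_increasing; auto. apply exp_pos.
  - rewrite <- (ln_exp (q2 c1 c2 t0 t)). apply ln_increasing; auto.
Qed.

Definition Uxf t := - p1 c1 c2 t0 t * exp (- (ym c1 c2 t0 t xi - q1 c1 c2 t0 t))
   + p2 c1 c2 t0 t * exp (- - (ym c1 c2 t0 t xi - q2 c1 c2 t0 t)).

Lemma u_deriv t : t < t0 -> is_derive (fun x => u c1 c2 t0 t x) (ym c1 c2 t0 t xi) (Uxf t).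
Proof.
  intros ht. destruct (order_t t ht) as [o1 o2].
  apply is_derive_ext_loc with
    (f := fun x => p1 c1 c2 t0 t * exp (- (x - q1 c1 c2 t0 t)) + p2 c1 c2 t0 t * exp (- - (x - q2 c1 c2 t0 t))).
  - apply locally_interval with (a := q1 c1 c2 t0 t) (b := q2 c1 c2 t0 t); simpl; auto.
    intros z hz1 hz2. unfold u. rewrite (Rabs_right (z - _)) by lra. rewrite (Rabs_left (z - q2 _ _ _ _)) by lra.
    reflexivity.
  - unfold Uxf. auto_derive; [exact I|]. unfold Rminus. ring.
Qed.

Definition Gf t := (c1 - c2) ^ 2 * (exp (c1 * (t - t0)) / Yf t + Yf t / exp (c2 * (t - t0))) ^ 2
   * (- c1 * c2 * exp (c2 * (t - t0))) * K0 / (Nf t * Dnf t).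

Lemma G_eq t : t < t0 -> Uxf t ^ 2 * Dyf t = Gf t.
Proof.
  intros ht. assert (hY := Yf_pos t). assert (hN := Nf_neg t). assert (hDn := Dnf_neg t).
  assert (hne := m_ne t ht).
  assert (hm1 : 0 < exp (c1 * (t - t0))) by apply exp_pos.
  assert (hm2 : 0 < exp (c2 * (t - t0))) by apply exp_pos.
  unfold Uxf, Dyf, Gf.
  replace (- (ym c1 c2 t0 t xi - q1 c1 c2 t0 t)) with (q1 c1 c2 t0 t + - ym c1 c2 t0 t xi) by ring.
  replace (- - (ym c1 c2 t0 t xi - q2 c1 c2 t0 t)) with (ym c1 c2 t0 t xi + - q2 c1 c2 t0 t) by ring.
  rewrite !exp_plus, !exp_Ropp, exp_q1, exp_q2, ym_Yf, exp_ln by auto.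
  unfold p1, p2. rewrite !hw_eq.
  set (m1 := exp (c1 * (t - t0))) in *. set (m2 := exp (c2 * (t - t0))) in *.
  set (Y := Yf t) in *. set (N := Nf t) in *. set (Dn := Dnf t) in *.
  assert (hw : 0 < m1 / m2) by (apply Rdiv_lt_0_compat; lra).
  assert (m1 < m2) by (unfold m1, m2; apply exp_increasing; nra).
  assert (hw1 : m1 / m2 < 1) by (apply (Rmult_lt_reg_r m2); [lra|]; field_simplify; lra).
  field. repeat split; try lra; nra.
Qed.

Lemma G_cont : continuity_pt Gf t0.
Proof.
  apply continuity_pt_filterlim.
  apply (ex_derive_continuous (K:=R_AbsRing) (V:=R_NormedModule)).
  assert (hY := Yf_pos t0). assert (hN := Nf_neg t0). assert (hDn := Dnf_neg t0).
  unfold Gf, Yf, Nf, Dnf, K0, Cp, Dp, Cf, Df in *.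
  auto_derive.
  unfold Rminus, Rdiv in *.
  replace ((c1 + - c2) * ((c1 + - c2) * 1)) with ((c1 + - c2) ^ 2) by ring.
  repeat split; try exact I; try (apply Rgt_not_eq, exp_pos); try (apply Rlt_not_eq; lra);
    try (apply Rgt_not_eq; lra);
    try (apply Rmult_integral_contrapositive; split; apply Rlt_not_eq; lra).
Qed.

Lemma G_val : Gf t0 = hstar c1 c2 t0 xi.
Proof.
  assert (hY := Yf_pos t0). assert (hN := Nf_neg t0). assert (hDn := Dnf_neg t0).
  assert (hh := hden_neg c1 c2 t0 hc1 hc2 ht0 xi).
  unfold Gf, hstar. unfold Yf in *. unfold Nf, Dnf, K0, Cp, Dp, Cf, Df, hden in *.
  replace (t0 - t0) with 0 in * by ring. rewrite !Rmult_0_r, !exp_0 in *.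
  set (E := exp (- (c1 - c2) * t0)) in *.
  set (a := exp (- c1 * t0)) in *. set (b := exp (c2 * t0)) in *.
  set (X := exp xi) in *.
  replace (exp (xi + c2 * t0)) with (X * b) in * by (unfold X, b; rewrite exp_plus; auto).
  replace (exp (xi - (c1 - c2) * t0)) with (X * E) in *
    by (unfold X, E; rewrite <- exp_plus; f_equal; ring).
  assert (hEab : E = a * b). { unfold E, a, b; rewrite <- exp_plus; f_equal; ring. }
  rewrite hEab in *.
  field. repeat split; try lra; apply Rlt_not_eq; lra.
Qed.

End P2.

Theorem mainTheorem6 (c1 c2 t0 : R) (hc1 : 0 < c1) (hc2 : c2 < 0) (ht0 : 0 < t0) :
  ((forall xi, q10 c1 c2 t0 <= xi <= q20 c1 c2 t0 -> hden c1 c2 t0 xi <> 0) ->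
   exists pr : Riemann_integrable (hstar c1 c2 t0) (q10 c1 c2 t0) (q20 c1 c2 t0),
     RiemannInt pr = - 4 * c1 * c2)
  /\
  (forall xi, q10 c1 c2 t0 < xi < q20 c1 c2 t0 ->
   exists delta : R, 0 < delta /\
   exists Ux Dy : R -> R,
     (forall t, t0 - delta < t < t0 ->
        derivable_pt_lim (fun x => u c1 c2 t0 t x) (ym c1 c2 t0 t xi) (Ux t) /\
        derivable_pt_lim (fun s => ym c1 c2 t0 t s) xi (Dy t)) /\
     limit1_in (fun t => (Ux t) ^ 2 * Dy t) (fun t => t0 - delta < t < t0)
       (hstar c1 c2 t0 xi) t0).
Proof.
  split.
  - intros _. apply part1; auto.
  - intros xi hxi. exists 1. split; [lra|].
    exists (Uxf c1 c2 t0 xi), (Dyf c1 c2 t0 xi). split.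
    + intros t [ht1 ht2]. split.
      * apply is_derive_Reals. apply u_deriv; auto.
      * apply is_derive_Reals. apply Dy_deriv; auto.
    + apply lim_of_cont with (g := Gf c1 c2 t0 xi).
      * intros t [_ h] e; lra.
      * intros t [_ h]. apply G_eq; auto.
      * apply G_cont; auto.
      * apply G_val; auto.
Qed.
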